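(* Let $\{z_n\}_{n\ge 0}$ be a sequence of positive real numbers satisfying $a_nz_{n+1}=b_nz_n+c_nz_{n-1}$ for all $n\ge 1$, where $a_n,b_n,c_n>0$, and let $\lambda_n=\frac{b_n+\sqrt{b_n^2+4a_nc_n}}{2a_n}$ for $n\ge 1$. Suppose there exists a sequence $\{\mu_n\}_{n\ge 1}$ of positive reals such that: (i) $\mu_n\le \lambda_n$ for all $n\ge 1$; (ii) $z_1\le \mu_1z_0$ and $z_2\le \mu_2z_1$; (iii) $a_n\mu_{n-1}\mu_{n+1}\ge b_n\mu_{n-1}+c_n$ for all $n\ge 2$. Then $\{z_n\}_{n\ge 0}$ is log-convex.
   Context: A sequence $a_0,a_1,\ldots$ of nonnegative real numbers is log-convex if $a_{k-1}a_{k+1}\ge a_k^2$ for all $k\ge 1$. *)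

(* Defs.v *)
From Stdlib Require Import Reals.
Open Scope R_scope.

Definition log_convex (a : nat -> R) : Prop :=
  (forall n, 0 <= a n) /\
  (forall k : nat, (1 <= k)%nat -> a (k - 1)%nat * a (k + 1)%nat >= (a k) ^ 2).

Definition lam (a b c : nat -> R) (n : nat) : R :=
  (b n + sqrt ((b n) ^ 2 + 4 * a n * c n)) / (2 * a n).

(* Main.v *)
Require Import Defs.
From Stdlib Require Import Reals Lra Lia Psatz.
Open Scope R_scope.

Lemma lam_facts (a b c : nat -> R) n :
  0 < a n -> 0 < b n -> 0 < c n ->
  a n * lam a b c n * lam a b c n = b n * lam a b c n + c n /\ b n <= a n * lam a b c n.
Proof.
  intros Ha Hb Hc. unfold lam.
  set (D := b n ^ 2 + 4 * a n * c n).
  assert (HD : 0 <= D) by (unfold D; nra).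
  set (s := sqrt D).
  assert (Hs : s * s = D) by (apply sqrt_sqrt; auto).
  assert (Hs0 : 0 <= s) by apply sqrt_pos.
  assert (Hbs : b n <= s) by (unfold D in Hs; nra).
  assert (E : a n * ((b n + s) / (2 * a n)) = (b n + s) / 2) by (field; lra).
  split.
  - rewrite E. apply Rmult_eq_reg_r with (2 * a n); [|lra].
    field_simplify; try lra. unfold D in Hs. nra.
  - rewrite E. lra.
Qed.

Lemma key (a b c l y w : R) : 0 < a -> a*l*l = b*l + c -> b <= a*l -> 0 <= y ->
  y <= l*w -> a*l*y <= b*y + c*w.
Proof. intros. nra. Qed.

Theorem theorem3p4 (z a b c mu : nat -> R) :
  (forall n, 0 < z n) ->
  (forall n, (1 <= n)%nat -> 0 < a n /\ 0 < b n /\ 0 < c n) ->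
  (forall n, (1 <= n)%nat -> a n * z (n + 1)%nat = b n * z n + c n * z (n - 1)%nat) ->
  (forall n, (1 <= n)%nat -> 0 < mu n) ->
  (forall n, (1 <= n)%nat -> mu n <= lam a b c n) ->
  z 1%nat <= mu 1%nat * z 0%nat ->
  z 2%nat <= mu 2%nat * z 1%nat ->
  (forall n, (2 <= n)%nat ->
     a n * mu (n - 1)%nat * mu (n + 1)%nat >= b n * mu (n - 1)%nat + c n) ->
  log_convex z.
Proof.
  intros Hz Habc Hrec Hmu Hml H1 H2 H3.
  (* general consequence: Q(k) -> z (k+1) >= lam_k z k, and log-convexity at k *)
  assert (G : forall k, (1 <= k)%nat -> z k <= mu k * z (k-1)%nat ->
            a k * lam a b c k * z k * z (k-1)%nat <= a k * z (k+1)%nat * z (k-1)%nat).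
  { intros k Hk Q. destruct (Habc k Hk) as (Ha & Hb & Hc).
    destruct (lam_facts a b c k Ha Hb Hc) as [F1 F2].
    pose proof (Hml k Hk). pose proof (Hmu k Hk). pose proof (Hz k). pose proof (Hz (k-1)%nat).
    rewrite (Rmult_assoc (a k)), Hrec by auto.
    assert (HH : z k <= lam a b c k * z (k-1)%nat) by nra.
    pose proof (key (a k) (b k) (c k) (lam a b c k) (z k) (z (k-1)%nat) Ha F1 F2 ltac:(lra) HH).
    nra. }
  assert (Q : forall m, z (S m) <= mu (S m) * z m /\ z (S (S m)) <= mu (S (S m)) * z (S m)).
  { induction m as [|m [IH1 IH2]]; [split; assumption|].
    split; [assumption|].
    pose proof (G (S m) ltac:(lia)) as Gm.
    replace (S m - 1)%nat with m in Gm by lia.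
    replace (S m + 1)%nat with (S (S m)) in Gm by lia.
    specialize (Gm IH1).
    destruct (Habc (S m) ltac:(lia)) as (Ha' & _ & _).
    pose proof (Hml (S m) ltac:(lia)).
    pose proof (Hz m). pose proof (Hz (S m)). pose proof (Hz (S (S m))).
    assert (L : mu (S m) * z (S m) <= z (S (S m))).
    { assert (lam a b c (S m) * z (S m) <= z (S (S m))).
      { apply Rmult_le_reg_r with (a (S m) * z m); [nra|]. nra. }
      pose proof (Hmu (S m) ltac:(lia)). nra. }
    pose proof (H3 (S (S m)) ltac:(lia)) as H3'.
    pose proof (Hrec (S (S m)) ltac:(lia)) as R.
    replace (S (S m) - 1)%nat with (S m) in H3', R by lia.
    replace (S (S m) + 1)%nat with (S (S (S m))) in H3', R by lia.
    destruct (Habc (S (S m)) ltac:(lia)) as (Ha & Hb & Hc).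
    pose proof (Hmu (S m) ltac:(lia)).
    pose proof (Hmu (S (S (S m))) ltac:(lia)).
    pose proof (Hz (S (S (S m)))).
    apply Rmult_le_reg_l with (a (S (S m)) * mu (S m)); [nra|].
    assert (a (S (S m)) * mu (S m) * z (S (S (S m))) = mu (S m) * (b (S (S m)) * z (S (S m)) + c (S (S m)) * z (S m))) by (rewrite <- R; ring).
    match goal with E: _ = mu (S m) * _ |- _ => rewrite E end. nra. }
  split.
  - intro n; left; apply Hz.
  - intros k Hk. destruct k as [|m]; [lia|].
    destruct (Q m) as [Qm _].
    pose proof (G (S m) Hk) as Gm.
    replace (S m - 1)%nat with m in Gm |- * by lia.
    specialize (Gm Qm).
    destruct (Habc (S m) Hk) as (Ha & Hb & Hc).
    pose proof (Hml (S m) Hk). pose proof (Hmu (S m) Hk).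
    pose proof (Hz m). pose proof (Hz (S m)).
    assert (z (S m) <= lam a b c (S m) * z m) by nra.
    assert (lam a b c (S m) * z (S m) <= z (S m + 1)%nat).
    { apply Rmult_le_reg_r with (a (S m) * z m); [nra|]. nra. }
    apply Rle_ge. replace (S m - 1)%nat with m by lia. assert (0 <= (lam a b c (S m) * z m - z (S m)) * z (S m)) by nra. nra.
Qed.
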